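(* Let $\bm A\colon\mathbb{R}^d\to\mathbb{R}^m$ and $\bm B\colon\mathbb{R}^d\to\mathbb{R}^n$ be linear maps. Let $\bm a_1,\bm a_2,\ldots\in\mathbb{R}^d$ be a sequence such that $\bm A\bm a_1,\bm A\bm a_2,\ldots$ converges to $\bm v\in\mathbb{R}^m$ and $\bm B$ is simultaneously unbounded on $\bm a_1,\bm a_2,\ldots$. Then there exist (1) $\bm a\in\mathbb{R}^d$ with $\bm A\bm a=\bm v$, and (2) $\bm d_\infty\in\mathbb{R}^d$ with $\bm A\bm d_\infty=\bm 0$ and $\bm B\bm d_\infty\gg\bm 0$.
   Context: $\bm B$ is simultaneously unbounded on a sequence $\bm a_1,\bm a_2,\dots$ if for every $K\in\mathbb{N}$, $\bm B\bm a_j\ge(K,\dots,K)$ componentwise for almost all $j$. For vectors, $\bm u\gg\bm w$ means $u_i>w_i$ for every component $i$. *)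

(* Defs.v *)
(* Vectors in R^k are column vectors 'cV[R]_k,
   linear maps R^d -> R^k are matrices 'M[R]_(k, d) acting by left multiplication. *)
From mathcomp Require Import all_boot all_algebra.
From mathcomp Require Import all_classical reals topology normedtype.
Import GRing.Theory Num.Theory numFieldNormedType.Exports.
Set Implicit Arguments. Unset Strict Implicit. Unset Printing Implicit Defensive.
Local Open Scope ring_scope.

Definition simul_unbounded (R : realType) (n d : nat) (B : 'M[R]_(n, d))
  (a : nat -> 'cV[R]_d) : Prop :=
  forall K : nat, exists N : nat, forall j : nat, (N <= j)%N ->
    forall i : 'I_n, K%:R <= (B *m a j) i 0.

(* Main.v *)
Require Import Defs.
From mathcomp Require Import all_boot all_algebra.
From mathcomp Require Import all_classical reals topology normedtype.
Import order.Order.TTheory GRing.Theory Num.Theory numFieldNormedType.Exports.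
Local Open Scope ring_scope.
Local Open Scope classical_set_scope.

Lemma entry_cvg (R : realType) p (u : nat -> 'cV[R]_p) (w : 'cV[R]_p) k :
  u j @[j --> \oo] --> w -> (u j k 0) @[j --> \oo] --> w k 0.
Proof. move=> H. have := (@continuous_cvg _ _ _ _ _ u (fun M : 'M[R]_(p,1) => M k 0) w (@coord_continuous _ p 1 k 0 w) H). exact. Qed.

Lemma mul_cvg (R : realType) p q (M : 'M[R]_(q, p)) (u : nat -> 'cV[R]_p) (w : 'cV[R]_p) :
  (forall k, (u j k 0) @[j --> \oo] --> w k 0) ->
  forall i, ((M *m u j) i 0) @[j --> \oo] --> (M *m w) i 0.
Proof.
move=> H i; rewrite mxE; under eq_cvg do rewrite mxE.
apply: cvg_big => //.
- exact: add_continuous.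
- move=> k _; exact: cvgMl_tmp.
Qed.

Theorem mainTheorem12 (R : realType) (d m n : nat)
  (A : 'M[R]_(m, d)) (B : 'M[R]_(n, d))
  (a : nat -> 'cV[R]_d) (v : 'cV[R]_m) :
  (A *m a j) @[j --> \oo] --> v ->
  simul_unbounded B a ->
  (exists a0 : 'cV[R]_d, A *m a0 = v) /\
  (exists dinf : 'cV[R]_d, A *m dinf = 0 /\ forall i : 'I_n, 0 < (B *m dinf) i 0).
Proof.
move=> Hc Hu.
pose Q := (pinvmx A^T)^T.
have AQA : A *m Q *m A = A.
  apply: trmx_inj; rewrite !trmx_mul trmxK mulmxA.
  exact: mulmxKpV (submx_refl _).
have He := fun k => @entry_cvg _ _ _ _ k Hc.
have HQ : forall i, ((A *m a j) i 0) @[j --> \oo] --> (A *m Q *m v) i 0.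
  move=> i; have := @mul_cvg _ _ _ (A *m Q) _ _ He i.
  by under eq_cvg do rewrite mulmxA AQA.
split.
  exists (Q *m v); apply/matrixP => i j; rewrite ord1 mulmxA.
  have H2 := He i.
exact: (cvg_unique _ (HQ i) H2).
pose c := B *m Q *m v.
pose S := \sum_k `|c k 0|.
have cS : forall i, c i 0 <= S.
  move=> i; rewrite /S (bigD1 i) //=; apply: le_trans (ler_norm _) _.
  by rewrite lerDl sumr_ge0.
have Hev : \forall j \near \oo, forall i, (B *m Q *m (A *m a j)) i 0 < c i 0 + 1.
  apply: filter_forall => i.
  have H3 := @mul_cvg _ _ _ (B *m Q) _ _ He i.
  have H4 := @cvgr_lt R _ _ _ _ _ H3 (c i 0 + 1).
  by apply: H4; rewrite ltrDl.
pose K := (Num.bound S).+1.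
have [N HN] := Hu K.
have [j [Hj1 Hj2]] := filter_ex (filterI (nbhs_infty_ge N) Hev).
exists (a j - Q *m (A *m a j)); split.
  by rewrite mulmxBr !mulmxA AQA subrr.
move=> i.
have -> : (B *m (a j - Q *m (A *m a j))) i 0 =
    (B *m a j) i 0 - (B *m Q *m (A *m a j)) i 0.
  rewrite mulmxBr -(mulmxA B Q).
  by rewrite !mxE.
rewrite subr_gt0; apply: (lt_le_trans (Hj2 i)).
apply: le_trans (HN j Hj1 i).
have S0 : 0 <= S by rewrite sumr_ge0.
have H5 := archi_boundP S0.
rewrite /K -natr1 lerD2r.
exact: le_trans (cS i) (ltW H5).
Qed.
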